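(* Let $(X,\tau)$ be a locally compact Hausdorff space that is non-compact, Lindelöf and zero-dimensional. If $\delta$ is a quasi-proximity compatible with $\tau$ such that $\mathcal{V}_\delta$ is transitive, then $|\pi(\delta)\cap T(\tau)|\ge 2^{2^{\aleph_0}}$.
   Context: Quasi-uniformities and quasi-proximities are in the sense of Fletcher–Lindgren; compatible means inducing $\tau$. $\pi(\delta)$ is the set of all quasi-uniformities inducing $\delta$, and $\mathcal{V}_\delta$ is its coarsest (totally bounded) element. A quasi-uniformity is transitive if it has a base of transitive entourages. $T(\tau)$ is the set of compatible transitive quasi-uniformities on $(X,\tau)$. *)

(* Defs.v *)
From Stdlib Require Import List.
Set Implicit Arguments.

Section Defs.
Set Implicit Arguments.
Variable X : Type.

Definition set := X -> Prop.
Definition rel := X -> X -> Prop.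
Definition fullset : set := fun _ => True.
Definition emptyset : set := fun _ => False.
Definition compl (A : set) : set := fun x => ~ A x.
Definition setU (A B : set) : set := fun x => A x \/ B x.
Definition single (x : X) : set := fun y => y = x.
Definition subset (A B : set) : Prop := forall x, A x -> B x.
Definition set_eq (A B : set) : Prop := forall x, A x <-> B x.

Definition is_topology (T : set -> Prop) : Prop :=
  T fullset /\ T emptyset /\
  (forall F : set -> Prop, (forall U, F U -> T U) ->
      T (fun x => exists U, F U /\ U x)) /\
  (forall U V, T U -> T V -> T (fun x => U x /\ V x)) /\
  (forall U V, set_eq U V -> T U -> T V).

Definition hausdorff (T : set -> Prop) : Prop :=
  forall x y, x <> y -> exists U V, T U /\ T V /\ U x /\ V y /\
      (forall z, U z -> V z -> False).

Definition compact (T : set -> Prop) (K : set) : Prop :=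
  forall F : set -> Prop, (forall U, F U -> T U) ->
    (forall x, K x -> exists U, F U /\ U x) ->
    exists l : list set, (forall U, In U l -> F U) /\
      (forall x, K x -> exists U, In U l /\ U x).

Definition locally_compact (T : set -> Prop) : Prop :=
  forall x, exists U K, T U /\ U x /\ subset U K /\ compact T K.

(* every open cover of X has a countable subcover (empty sets allowed as padding) *)
Definition lindelof (T : set -> Prop) : Prop :=
  forall F : set -> Prop, (forall U, F U -> T U) ->
    (forall x, exists U, F U /\ U x) ->
    exists g : nat -> set, (forall n, F (g n) \/ set_eq (g n) emptyset) /\
      (forall x, exists n, g n x).

Definition zero_dimensional (T : set -> Prop) : Prop :=
  forall U x, T U -> U x -> exists C, T C /\ T (compl C) /\ C x /\ subset C U.

Definition rsub (U V : rel) : Prop := forall x y, U x y -> V x y.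
Definition rcomp (U V : rel) : rel := fun x z => exists y, U x y /\ V y z.

Definition quasi_uniformity (Q : rel -> Prop) : Prop :=
  Q (fun _ _ => True) /\
  (forall U V, Q U -> rsub U V -> Q V) /\
  (forall U V, Q U -> Q V -> Q (fun x y => U x y /\ V x y)) /\
  (forall U, Q U -> forall x, U x x) /\
  (forall U, Q U -> exists V, Q V /\ rsub (rcomp V V) U).

Definition qu_topology (Q : rel -> Prop) (G : set) : Prop :=
  forall x, G x -> exists U, Q U /\ forall y, U x y -> G y.

Definition qu_compatible (T : set -> Prop) (Q : rel -> Prop) : Prop :=
  forall G, T G <-> qu_topology Q G.

Definition transitive_qu (Q : rel -> Prop) : Prop :=
  forall U, Q U -> exists V, Q V /\ rsub V U /\
    (forall x y z, V x y -> V y z -> V x z).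

Definition in_T (T : set -> Prop) (Q : rel -> Prop) : Prop :=
  quasi_uniformity Q /\ qu_compatible T Q /\ transitive_qu Q.

Definition quasi_proximity (d : set -> set -> Prop) : Prop :=
  (forall A A' B B', set_eq A A' -> set_eq B B' -> d A B -> d A' B') /\
  (forall A B C, d A (setU B C) <-> d A B \/ d A C) /\
  (forall A B C, d (setU A B) C <-> d A C \/ d B C) /\
  ~ d emptyset fullset /\ ~ d fullset emptyset /\
  (forall A B, (exists x, A x /\ B x) -> d A B) /\
  (forall A B, ~ d A B -> exists C, ~ d A C /\ ~ d (compl C) B).

Definition qp_topology (d : set -> set -> Prop) (G : set) : Prop :=
  forall x, G x -> ~ d (single x) (compl G).

Definition qp_compatible (T : set -> Prop) (d : set -> set -> Prop) : Prop :=
  forall G, T G <-> qp_topology d G.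

Definition qu_qprox (Q : rel -> Prop) (A B : set) : Prop :=
  forall U, Q U -> exists a b, A a /\ B b /\ U a b.

Definition pi_delta (d : set -> set -> Prop) (Q : rel -> Prop) : Prop :=
  quasi_uniformity Q /\ forall A B, qu_qprox Q A B <-> d A B.

(* V_delta: the (totally bounded) quasi-uniformity with subbase
   { ((X\A) x X) u (X x (X\B)) : A non-delta B }, the coarsest element of pi(delta) *)
Definition V_delta (d : set -> set -> Prop) (W : rel) : Prop :=
  exists l : list (set * set),
    (forall p, In p l -> ~ d (fst p) (snd p)) /\
    (forall x y, (forall p, In p l -> ~ fst p x \/ ~ snd p y) -> W x y).

End Defs.

(* Main.v *)
Require Import Defs.
From Stdlib Require Import List Arith Lia Classical ClassicalEpsilon FunctionalExtensionality Cantor.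
Import ListNotations.


Lemma qp_monoL {X} {d : set X -> set X -> Prop} (Hd : quasi_proximity d) {A A' B} :
  subset A A' -> d A B -> d A' B.
Proof.
  destruct Hd as (Hext & HuR & HuL & H0X & HX0 & Hint & Htri).
  intros Hs HAB. apply (Hext (setU A A') A' B B).
  - intro x; unfold setU; split; [intros [h|h]; auto| auto].
  - intro; tauto.
  - apply HuL. auto.
Qed.

Lemma qp_monoR {X} {d : set X -> set X -> Prop} (Hd : quasi_proximity d) {A B B'} :
  subset B B' -> d A B -> d A B'.
Proof.
  destruct Hd as (Hext & HuR & HuL & H0X & HX0 & Hint & Htri).
  intros Hs HAB. apply (Hext A A (setU B B') B').
  - intro; tauto.
  - intro x; unfold setU; split; [intros [h|h]; auto| auto].
  - apply HuR. auto.
Qed.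

Lemma qp_nonempty {X} {d : set X -> set X -> Prop} (Hd : quasi_proximity d) {A B} :
  d A B -> (exists a, A a) /\ (exists b, B b).
Proof.
  intro H. split.
  - apply NNPP; intro Hn. pose proof Hd as Hd'.
    destruct Hd' as (Hext & HuR & HuL & H0X & HX0 & Hint & Htri).
    apply H0X. apply (qp_monoR Hd (B:=B)); [intros x _; exact I|].
    apply (Hext A (@emptyset X) B B); auto; [|intro; tauto].
    intro x; split; [intro; apply Hn; eauto | intros []].
  - apply NNPP; intro Hn. pose proof Hd as Hd'.
    destruct Hd' as (Hext & HuR & HuL & H0X & HX0 & Hint & Htri).
    apply HX0. apply (qp_monoL Hd (A:=A)); [intros x _; exact I|].
    apply (Hext A A B (@emptyset X)); auto; [intro; tauto|].
    intro x; split; [intro; apply Hn; eauto | intros []].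
Qed.

Lemma qp_splitL {X} {d : set X -> set X -> Prop} (Hd : quasi_proximity d) {A B} (P : set X) :
  d A B -> d (fun x => A x /\ P x) B \/ d (fun x => A x /\ ~ P x) B.
Proof.
  pose proof Hd as Hd'. destruct Hd' as (Hext & HuR & HuL & H0X & HX0 & Hint & Htri).
  intro H. apply HuL. apply (Hext A _ B B); auto; [|intro; tauto].
  intro x; unfold setU; split; [intro; destruct (classic (P x)); tauto| tauto].
Qed.

Lemma qp_splitR {X} {d : set X -> set X -> Prop} (Hd : quasi_proximity d) {A B} (P : set X) :
  d A B -> d A (fun x => B x /\ P x) \/ d A (fun x => B x /\ ~ P x).
Proof.
  pose proof Hd as Hd'. destruct Hd' as (Hext & HuR & HuL & H0X & HX0 & Hint & Htri).
  intro H. apply HuR. apply (Hext A A B _); auto; [intro; tauto|].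
  intro x; unfold setU; split; [intro; destruct (classic (P x)); tauto| tauto].
Qed.

Lemma qp_disj {X} {d : set X -> set X -> Prop} (Hd : quasi_proximity d) {A B x} :
  ~ d A B -> A x -> B x -> False.
Proof.
  destruct Hd as (Hext & HuR & HuL & H0X & HX0 & Hint & Htri).
  intros H a b; apply H, Hint; eauto.
Qed.

Definition Srel {X} (l : list (set X * set X)) (x y : X) : Prop :=
  forall p, In p l -> ~ fst p x \/ ~ snd p y.
Definition allfar {X} (d : set X -> set X -> Prop) (l : list (set X * set X)) : Prop :=
  forall p, In p l -> ~ d (fst p) (snd p).

Lemma P1 {X} {d : set X -> set X -> Prop} (Hd : quasi_proximity d) l :
  allfar d l -> forall A B, d A B -> exists A' B', subset A' A /\ subset B' B /\ d A' B' /\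
    forall a b, A' a -> B' b -> Srel l a b.
Proof.
  induction l as [|p l IH]; intros Hl A B HAB.
  - exists A, B; repeat split; try (intros ? h; exact h); auto.
    intros a b _ _ p [].
  - destruct (IH (fun q hq => Hl q (or_intror hq)) A B HAB) as (A1 & B1 & sA & sB & d1 & S1).
    destruct (qp_splitL Hd (fst p) d1) as [h|h].
    + destruct (qp_splitR Hd (snd p) h) as [h2|h2].
      * exfalso. apply (Hl p (or_introl eq_refl)).
        apply (qp_monoL Hd (A := fun x => A1 x /\ fst p x)); [intros x hx; tauto|].
        apply (qp_monoR Hd (B := fun x => B1 x /\ snd p x)); [intros x hx; tauto|]. auto.
      * eexists _, _; split; [|split; [|split]]; [| |exact h2|].
        -- intros x hx; apply sA; tauto.
        -- intros x hx; apply sB; tauto.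
        -- intros a b ha hb q [<-|hq]; [cbv beta in *; tauto|]. cbv beta in *; apply (S1 a b); tauto.
    + eexists _, _; split; [|split; [|split]]; [| |exact h|].
      -- intros x hx; apply sA; tauto.
      -- intros x hx; apply sB; tauto.
      -- intros a b ha hb q [<-|hq]; [cbv beta in *; tauto|]. cbv beta in *; apply (S1 a b); tauto.
Qed.

Lemma H0 {X} {d : set X -> set X -> Prop} (Hd : quasi_proximity d) (H : nat -> set X) :
  (forall n x, H n x -> H (S n) x) ->
  (forall n, ~ d (H n) (compl (H n))) ->
  (forall x, exists n, H n x) ->
  forall A B, d A B -> exists a b, A a /\ B b /\ forall n, H n a -> H n b.
Proof.
  intros Hm Hs Hc.
  assert (Hle : forall n m x, n <= m -> H n x -> H m x).
  { intros n m x hle; induction hle; auto. }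
  assert (Hloc : forall A B N, d A B -> subset A (H N) -> d A (fun x => B x /\ H N x)).
  { intros A B N dAB sA. destruct (qp_splitR Hd (H N) dAB) as [h|h]; auto.
    exfalso. apply (Hs N). apply (qp_monoL Hd (A:=A)); auto.
    apply (qp_monoR Hd (B:=fun x => B x /\ ~ H N x)); auto.
    intros x hx; unfold compl; tauto. }
  intros A B dAB.
  destruct (classic (exists N, d (fun x => A x /\ H N x) B)) as [[N hN]|hN].
  - revert hN. induction N as [|N IH]; intro hN.
    + pose proof (Hloc _ _ 0 hN (fun x hx => proj2 hx)) as h.
      destruct (qp_nonempty Hd h) as [[a ha] [b hb]].
      exists a, b; repeat split; try tauto.
      intros n _; apply Hle with 0; [lia| tauto].
    + destruct (qp_splitL Hd (H N) hN) as [h|h].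
      * apply IH. refine (qp_monoL Hd _ h). intros x hx; tauto.
      * pose proof (Hloc _ _ (S N) h (fun x hx => proj2 (proj1 hx))) as h2.
        destruct (qp_nonempty Hd h2) as [[a ha] [b hb]].
        exists a, b; repeat split; try tauto.
        intros n hn. destruct (le_lt_dec n N) as [hl|hl].
        -- exfalso. apply (proj2 ha). apply Hle with n; auto.
        -- apply Hle with (S N); [lia| tauto].
  - destruct (qp_nonempty Hd dAB) as [_ [b hb]].
    destruct (Hc b) as [M hM].
    destruct (qp_splitL Hd (H M) dAB) as [h|h]; [exfalso; eauto|].
    destruct (qp_nonempty Hd h) as [[a ha] _].
    exists a, b; repeat split; try tauto.
    intros n hn. destruct (le_lt_dec n M) as [hl|hl].
    + exfalso. apply (proj2 ha). apply Hle with n; auto.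
    + apply Hle with M; [lia| tauto].
Qed.

Lemma Hlemma {X} {d : set X -> set X -> Prop} (Hd : quasi_proximity d) (H : nat -> set X) :
  (forall n x, H n x -> H (S n) x) ->
  (forall n, ~ d (H n) (compl (H n))) ->
  (forall x, exists n, H n x) ->
  forall l, allfar d l -> forall A B, d A B ->
  exists a b, A a /\ B b /\ Srel l a b /\ forall n, H n a -> H n b.
Proof.
  intros Hm Hs Hc l Hl A B dAB.
  destruct (P1 Hd l Hl A B dAB) as (A' & B' & sA & sB & d' & S').
  destruct (H0 Hd H Hm Hs Hc _ _ d') as (a & b & ha & hb & he).
  exists a, b; auto.
Qed.

Lemma mono_le {X} (H : nat -> set X) : (forall n x, H n x -> H (S n) x) ->
  forall n m x, n <= m -> H n x -> H m x.
Proof. intros Hm n m x hle; induction hle; auto. Qed.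

Definition Erel {X} (H : nat -> set X) (D : nat -> Prop) (x y : X) : Prop :=
  forall k, D k -> H k x -> H k y.
Fixpoint code (p : nat -> bool) (n : nat) : nat :=
  match n with 0 => 0 | S m => 2 * code p m + (if p m then 1 else 0) end.
Definition vv (p : nat -> bool) (n : nat) : nat := to_nat (n, code p n).
Definition Dp (p : nat -> bool) (k : nat) : Prop :=
  exists n t, t < n /\ k = vv p n * vv p n + t.
Definition Qf {X} (d : set X -> set X -> Prop) (H : nat -> set X)
  (S : (nat -> bool) -> Prop) (W : rel X) : Prop :=
  exists l L, allfar d l /\ (forall q, In q L -> S q) /\
    forall x y, Srel l x y -> (forall q, In q L -> Erel H (Dp q) x y) -> W x y.

Lemma code_inj p q n : code p n = code q n -> forall i, i < n -> p i = q i.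
Proof.
  induction n as [|n IH]; intros He i hi; [lia|]. simpl in He.
  destruct (p n) eqn:E1, (q n) eqn:E2;
  (assert (code p n = code q n) by lia);
  (destruct (Nat.eq_dec i n) as [->|hne]; [congruence || lia | apply IH; auto; lia]).
Qed.

Lemma sq_inj v v' t t' : t <= v -> t' <= v' -> v*v + t = v'*v' + t' -> v = v'.
Proof.
  intros h1 h2 h3. destruct (lt_eq_lt_dec v v') as [[h|h]|h]; auto.
  - assert ((v+1)*(v+1) <= v'*v') by (apply Nat.mul_le_mono; lia). lia.
  - assert ((v'+1)*(v'+1) <= v*v) by (apply Nat.mul_le_mono; lia). lia.
Qed.

Lemma Dp_unique p q n t k : t < n -> k = vv p n * vv p n + t -> Dp q k ->
  code p n = code q n.
Proof.
  intros ht hk [n' [t' [ht' hk']]].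
  assert (h1 : n <= vv p n) by (unfold vv; pose proof (to_nat_non_decreasing n (code p n)); lia).
  assert (h2 : n' <= vv q n') by (unfold vv; pose proof (to_nat_non_decreasing n' (code q n')); lia).
  assert (E : vv p n = vv q n') by (apply sq_inj with t t'; lia).
  unfold vv in E. apply (f_equal of_nat) in E. rewrite !cancel_of_to in E.
  injection E as -> ->. reflexivity.
Qed.

Lemma partition {X} (P : set X) (z : nat -> X) (idx : list nat) : NoDup idx ->
  exists i1 i2, NoDup i1 /\ NoDup i2 /\ length i1 + length i2 = length idx /\
    (forall i, In i i1 -> In i idx /\ P (z i)) /\ (forall i, In i i2 -> In i idx /\ ~ P (z i)).
Proof.
  induction idx as [|a idx IH]; intro hnd.
  - exists nil, nil; simpl; split; [constructor|split; [constructor|split; [reflexivity|split; intros ? []]]].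
  - apply NoDup_cons_iff in hnd as [hna hnd].
    destruct (IH hnd) as (i1 & i2 & n1 & n2 & hl & h1 & h2).
    destruct (classic (P (z a))) as [hp|hp].
    + exists (a :: i1), i2; simpl; split; [|split; [|split; [|split]]]; auto.
      * constructor; auto. intro hi; apply hna, h1, hi.
      * intros i [<-|hi]; [auto|]. split; [right|]; apply h1; auto.
      * intros i hi; split; [right|]; apply h2; auto.
    + exists i1, (a :: i2); simpl; split; [|split; [|split; [|split]]]; auto.
      * constructor; auto. intro hi; apply hna, h2, hi.
      * lia.
      * intros i hi; split; [right|]; apply h1; auto.
      * intros i [<-|hi]; [auto|]. split; [right|]; apply h2; auto.
Qed.

Lemma pigeon {X} (Ps : list (set X)) (z : nat -> X) : forall idx, NoDup idx ->
  2 ^ length Ps < length idx ->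
  exists i j, In i idx /\ In j idx /\ i < j /\ forall P, In P Ps -> (P (z i) <-> P (z j)).
Proof.
  induction Ps as [|P Ps IH]; intros idx hnd hlen.
  - destruct idx as [|a [|b r]]; simpl in hlen; try lia.
    apply NoDup_cons_iff in hnd as [hna _].
    assert (a <> b) by (intro; subst; apply hna; left; auto).
    destruct (Nat.lt_total a b) as [h|[h|h]]; [| congruence |].
    + exists a, b; simpl; split; [auto|split; [auto|split; [auto|intros ? []]]].
    + exists b, a; simpl; split; [auto|split; [auto|split; [auto|intros ? []]]].
  - destruct (partition P z idx hnd) as (i1 & i2 & n1 & n2 & hl & h1 & h2).
    simpl in hlen.
    destruct (le_lt_dec (length i1) (2 ^ length Ps)) as [hh|hh].
    + destruct (IH i2 n2 ltac:(lia)) as (i & j & hi & hj & hij & hP).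
      exists i, j; split; [apply h2; auto|split; [apply h2; auto|split; [auto|]]].
      intros Q [<-|hq]; [|apply hP; auto].
      pose proof (proj2 (h2 i hi)); pose proof (proj2 (h2 j hj)); tauto.
    + destruct (IH i1 n1 hh) as (i & j & hi & hj & hij & hP).
      exists i, j; split; [apply h1; auto|split; [apply h1; auto|split; [auto|]]].
      intros Q [<-|hq]; [|apply hP; auto].
      pose proof (proj2 (h1 i hi)); pose proof (proj2 (h1 j hj)); tauto.
Qed.

Lemma diff_index (p : nat -> bool) (L : list (nat -> bool)) :
  (forall q, In q L -> q <> p) -> exists N, forall q, In q L -> exists k, k < N /\ p k <> q k.
Proof.
  induction L as [|q L IH]; intro hL.
  - exists 0; intros q [].
  - destruct (IH (fun r hr => hL r (or_intror hr))) as [N hN].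
    assert (exists k, p k <> q k) as [k hk].
    { apply NNPP; intro hn. apply (hL q (or_introl eq_refl)).
      apply functional_extensionality; intro k. apply NNPP; intro hk. apply hn; eauto. }
    exists (N + S k); intros r [<-|hr].
    + exists k; split; auto; lia.
    + destruct (hN r hr) as [k' [hk' hne]]; exists k'; split; auto; lia.
Qed.

Lemma distinct {X} {d : set X -> set X -> Prop} (Hd : quasi_proximity d) (H : nat -> set X) (w : nat -> X) :
  (forall n x, H n x -> H (S n) x) ->
  (forall n, ~ H n (w n) /\ H (S n) (w n)) ->
  forall (S1 S2 : (nat -> bool) -> Prop) p, (forall W, Qf d H S1 W -> Qf d H S2 W) -> S1 p -> S2 p.
Proof.
  intros Hm Hw S1 S2 p HQ Sp. apply NNPP; intro nS.
  assert (Qf d H S1 (Erel H (Dp p))) as HE.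
  { exists nil, (p :: nil); repeat split.
    - intros ? [].
    - intros q [<-|[]]; auto.
    - intros x y _ hq. apply hq; left; auto. }
  destruct (HQ _ HE) as (l & L & Hl & HL & HW).
  destruct (diff_index p L) as [N HN].
  { intros q hq <-. apply nS, HL, hq. }
  set (n := N + 2 ^ length (map fst l) + 1).
  set (v := vv p n).
  set (z := fun t => w (v * v + t)).
  destruct (pigeon (map fst l) z (seq 0 n) (seq_NoDup n 0)) as (i & j & hi & hj & hij & hP).
  { rewrite length_seq. unfold n; lia. }
  apply in_seq in hi. apply in_seq in hj.
  assert (Hle := mono_le H Hm).
  assert (Hx1 : ~ H (v * v + i) (z i)) by apply Hw.
  assert (Hx2 : H (S (v * v + i)) (z i)) by apply Hw.
  assert (Hy1 : ~ H (v * v + j) (z j)) by apply Hw.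
  assert (Hy2 : H (S (v * v + j)) (z j)) by apply Hw.
  assert (HE2 : Erel H (Dp p) (z i) (z j)).
  { apply HW.
    - intros pr hpr. destruct (classic (fst pr (z i))) as [h|h]; [right|left; auto].
      assert (hfj : fst pr (z j)) by (apply (hP (fst pr)); auto; apply in_map; auto).
      intro h'. apply (qp_disj Hd (Hl pr hpr) hfj h').
    - intros q hq k hk hx.
      destruct (le_lt_dec k (v * v + i)) as [h|h].
      { exfalso; apply Hx1, Hle with k; auto. }
      destruct (le_lt_dec k (v * v + j)) as [h'|h'].
      + exfalso.
        assert (code p n = code q n) as hc.
        { pose proof (Dp_unique p q n (k - v * v) k ltac:(lia) ltac:(fold v; lia) hk) as hc.
          exact hc. }
        destruct (HN q hq) as [kk [hkk hne]]. apply hne. apply code_inj with n; auto. unfold n; lia.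
      + apply Hle with (S (v * v + j)); auto. }
  apply Hy1. apply Hle with (v * v + S i); [lia|].
  apply HE2.
  - exists n, (S i); split; [lia| reflexivity].
  - replace (v * v + S i) with (S (v * v + i)) by lia. exact Hx2.
Qed.

Lemma Q_trans_base {X} {d : set X -> set X -> Prop} (Htr : transitive_qu (V_delta d))
  (H : nat -> set X) S W : Qf d H S W ->
  exists V, Qf d H S V /\ rsub V W /\ (forall x y z, V x y -> V y z -> V x z).
Proof.
  intros (l & L & Hl & HL & HW).
  destruct (Htr (Srel l)) as (T & HT & Hsub & Htrans).
  { exists l; split; auto. }
  destruct HT as (l' & Hl' & HT').
  exists (fun x y => T x y /\ forall q, In q L -> Erel H (Dp q) x y).
  split; [|split].
  - exists l', L; split; [exact Hl'|split; auto].
  - intros x y [h1 h2]. apply HW; auto.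
  - intros x y z [h1 h2] [h3 h4]; split; eauto.
    intros q hq k hk hx. apply (h4 q hq k hk), (h2 q hq k hk), hx.
Qed.

Lemma Q_good {X} (tau : set X -> Prop) {d : set X -> set X -> Prop} (Hd : quasi_proximity d)
  (Hc : qp_compatible tau d) (Htr : transitive_qu (V_delta d)) (H : nat -> set X) :
  (forall n x, H n x -> H (S n) x) ->
  (forall n, ~ d (H n) (compl (H n))) ->
  (forall x, exists n, H n x) ->
  forall S1, pi_delta d (Qf d H S1) /\ in_T tau (Qf d H S1).
Proof.
  intros Hm Hs Hcov S1.
  assert (HQU : quasi_uniformity (Qf d H S1)).
  { split; [|split; [|split; [|split]]].
    - exists nil, nil; split; [intros ? []|split; [intros ? []|]]. intros; exact I.
    - intros U V (l & L & Hl & HL & HW) hsub. exists l, L; split; auto.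
    - intros U V (l1 & L1 & Hl1 & HL1 & HW1) (l2 & L2 & Hl2 & HL2 & HW2).
      exists (l1 ++ l2), (L1 ++ L2); split; [|split].
      + intros p hp; apply in_app_iff in hp as [hp|hp]; auto.
      + intros q hq; apply in_app_iff in hq as [hq|hq]; auto.
      + intros x y hS hE; split.
        * apply HW1; [intros p hp; apply hS, in_app_iff; auto|intros q hq; apply hE, in_app_iff; auto].
        * apply HW2; [intros p hp; apply hS, in_app_iff; auto|intros q hq; apply hE, in_app_iff; auto].
    - intros U (l & L & Hl & HL & HW) x. apply HW.
      + intros p hp. destruct (classic (fst p x)) as [h|h]; [right|left; auto].
        intro h'; apply (qp_disj Hd (Hl p hp) h h').
      + intros q _ k _ h; exact h.
    - intros U hU. destruct (Q_trans_base Htr H S1 U hU) as (V & hV & hsub & htr).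
      exists V; split; auto. intros x z [y [h1 h2]]. apply hsub; eauto. }
  split; split; auto.
  - intros A B; split.
    + intro hq. apply NNPP; intro nd.
      destruct (hq (Srel ((A, B) :: nil))) as (a & b & ha & hb & hab).
      { exists ((A, B) :: nil), nil; split; [intros p [<-|[]]; auto|split; [intros ? []|]].
        intros x y h _; exact h. }
      destruct (hab (A, B) (or_introl eq_refl)); auto.
    + intros dAB U (l & L & Hl & HL & HW).
      destruct (Hlemma Hd H Hm Hs Hcov l Hl A B dAB) as (a & b & ha & hb & hS & hE).
      exists a, b; split; auto; split; auto. apply HW; auto.
      intros q _ k _ h; auto.
  - split.
    + intro G; split.
      * intros hG x hx. apply Hc in hG. specialize (hG x hx).
        exists (Srel ((single x, compl G) :: nil)); split.
        -- exists ((single x, compl G) :: nil), nil; split; [intros p [<-|[]]; auto|split; [intros ? []|]].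
           intros a b h _; exact h.
        -- intros y hy. destruct (hy _ (or_introl eq_refl)) as [h|h].
           ++ exfalso; apply h; reflexivity.
           ++ apply NNPP; exact h.
      * intros hq. apply Hc. intros x hx hd.
        destruct (hq x hx) as (U & (l & L & Hl & HL & HW) & hU).
        destruct (Hlemma Hd H Hm Hs Hcov l Hl _ _ hd) as (a & b & ha & hb & hS & hE).
        unfold single in ha; subst a. apply hb, hU, HW; auto.
        intros q _ k _ h; auto.
    + intros U hU. destruct (Q_trans_base Htr H S1 U hU) as (V & hV & hsub & htr).
      exists V; auto.
Qed.

Lemma far_empty {X} {d : set X -> set X -> Prop} (Hd : quasi_proximity d) B : ~ d (@emptyset X) B.
Proof.
  intro h. pose proof Hd as (Hext & HuR & HuL & H0X & HX0 & Hint & Htri).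
  apply H0X. apply (qp_monoR Hd (B:=B)); auto. intros x _; exact I.
Qed.

Lemma far_of_sub_empty {X} {d : set X -> set X -> Prop} (Hd : quasi_proximity d) (A B : set X) :
  (forall x, ~ A x) -> ~ d A B.
Proof.
  intros hA h. apply (far_empty Hd B). apply (qp_monoL Hd (A:=A)); [|exact h].
  intros x hx; exfalso; apply (hA x hx).
Qed.

Lemma far_bigU {X} {d : set X -> set X -> Prop} (Hd : quasi_proximity d) (l : list (set X)) B :
  (forall U, In U l -> ~ d U B) -> ~ d (fun y => exists U, In U l /\ U y) B.
Proof.
  pose proof Hd as (Hext & HuR & HuL & H0X & HX0 & Hint & Htri).
  induction l as [|U l IH]; intros hl.
  - apply far_of_sub_empty; auto. intros x [U [[] _]].
  - intro h. assert (h' : d (setU U (fun y => exists U, In U l /\ U y)) B).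
    { refine (Hext _ _ B B _ _ h); [|intro; tauto].
      intro x; unfold setU; split.
      - intros [V [[<-|hV] hx]]; [left; auto|right; eauto].
      - intros [hx|[V [hV hx]]]; [exists U; simpl; auto|exists V; simpl; auto]. }
    apply HuL in h' as [h'|h'].
    + apply (hl U (or_introl eq_refl) h').
    + apply IH; auto. intros V hV; apply hl; right; auto.
Qed.

Lemma compact_far {X} (tau : set X -> Prop) {d : set X -> set X -> Prop} (Hd : quasi_proximity d)
  (Hc : qp_compatible tau d) (K G : set X) :
  compact tau K -> subset K G -> tau G -> ~ d K (compl G).
Proof.
  pose proof Hd as (Hext & HuR & HuL & H0X & HX0 & Hint & Htri).
  intros hK hsub hG.
  set (F := fun U : set X => exists C, ~ d (compl C) (compl G) /\ U = (fun y => ~ d (single y) C)).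
  destruct (hK F) as [l [hl hcov]].
  - intros U [C [hC ->]]. apply Hc. intros y hy hd.
    destruct (Htri _ _ hy) as [E [h1 h2]]. apply h1.
    apply (qp_monoR Hd (B:=compl (fun y0 => ~ d (single y0) C))); auto.
    intros z hz. apply NNPP; intro hE. apply hz. intro hz'.
    apply h2. apply (qp_monoL Hd (A:=single z)); auto.
    intros u hu; unfold single in hu; subst u; exact hE.
  - intros x hx. apply Hc in hG. specialize (hG x (hsub x hx)).
    destruct (Htri _ _ hG) as [C [h1 h2]].
    exists (fun y => ~ d (single y) C); split; auto. exists C; auto.
  - intro h. apply (far_bigU Hd l (compl G)).
    + intros U hU. destruct (hl U hU) as [C [hC ->]]. intro h'.
      apply hC. apply (qp_monoL Hd (A:=fun y => ~ d (single y) C)); auto.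
      intros y hy hCy. apply hy, Hint. exists y; split; [reflexivity|auto].
    + apply (qp_monoL Hd (A:=K)); auto.
Qed.

Lemma list_filter_F {X} (F : set X -> Prop) (C0 : set X) (l : list (set X)) :
  (forall U, In U l -> F U \/ U = C0) ->
  exists l', (forall U, In U l' -> F U) /\ forall U, In U l -> F U -> In U l'.
Proof.
  induction l as [|U l IH]; intro hl.
  - exists nil; split; [intros ? []|intros ? []].
  - destruct IH as [l' [h1 h2]]; [intros V hV; apply hl; right; auto|].
    destruct (classic (F U)) as [hU|hU].
    + exists (U :: l'); split.
      * intros V [<-|hV]; auto.
      * intros V [<-|hV] hF; [left; auto|right; auto].
    + exists l'; split; auto.
      intros V [<-|hV] hF; [contradiction|auto].
Qed.

Lemma compact_closed_sub {X} (tau : set X -> Prop) (K C : set X) :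
  compact tau K -> subset C K -> tau (compl C) -> compact tau C.
Proof.
  intros hK hsub hC F hF hcov.
  destruct (hK (fun U => F U \/ U = compl C)) as [l [hl hc]].
  - intros U [h| ->]; auto.
  - intros x hx. destruct (classic (C x)) as [h|h].
    + destruct (hcov x h) as [U [h1 h2]]; eauto.
    + exists (compl C); split; auto.
  - destruct (list_filter_F F (compl C) l hl) as [l' [h1 h2]].
    exists l'; split; auto.
    intros x hx. destruct (hc x (hsub x hx)) as [U [hU hUx]].
    destruct (hl U hU) as [h| ->].
    + exists U; auto.
    + exfalso; apply hUx, hx.
Qed.

Lemma compact_union {X} (tau : set X -> Prop) (K1 K2 : set X) :
  compact tau K1 -> compact tau K2 -> compact tau (setU K1 K2).
Proof.
  intros h1 h2 F hF hcov.
  destruct (h1 F hF (fun x hx => hcov x (or_introl hx))) as [l1 [a1 b1]].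
  destruct (h2 F hF (fun x hx => hcov x (or_intror hx))) as [l2 [a2 b2]].
  exists (l1 ++ l2); split.
  - intros U hU; apply in_app_iff in hU as [hU|hU]; auto.
  - intros x [hx|hx].
    + destruct (b1 x hx) as [U [hU hUx]]; exists U; rewrite in_app_iff; auto.
    + destruct (b2 x hx) as [U [hU hUx]]; exists U; rewrite in_app_iff; auto.
Qed.

Lemma compact_ext {X} (tau : set X -> Prop) (K K' : set X) :
  set_eq K K' -> compact tau K -> compact tau K'.
Proof.
  intros he hK F hF hcov. destruct (hK F hF) as [l [h1 h2]].
  - intros x hx; apply hcov, he, hx.
  - exists l; split; auto. intros x hx; apply h2, he, hx.
Qed.

Lemma selffar_union {X} {d : set X -> set X -> Prop} (Hd : quasi_proximity d) (A B : set X) :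
  ~ d A (compl A) -> ~ d B (compl B) -> ~ d (setU A B) (compl (setU A B)).
Proof.
  pose proof Hd as (Hext & HuR & HuL & H0X & HX0 & Hint & Htri).
  intros hA hB h. apply HuL in h as [h|h].
  - apply hA. apply (qp_monoR Hd (B:=compl (setU A B))); auto.
    intros x hx h'; apply hx; left; auto.
  - apply hB. apply (qp_monoR Hd (B:=compl (setU A B))); auto.
    intros x hx h'; apply hx; right; auto.
Qed.

Lemma selffar_ext {X} {d : set X -> set X -> Prop} (Hd : quasi_proximity d) (A A' : set X) :
  set_eq A A' -> ~ d A (compl A) -> ~ d A' (compl A').
Proof.
  pose proof Hd as (Hext & HuR & HuL & H0X & HX0 & Hint & Htri).
  intros he hA h. apply hA. apply (Hext A' A (compl A') (compl A)); auto.
  - intro x; split; apply he.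
  - intro x; unfold compl; split; intros h1 h2; apply h1, he, h2.
Qed.

Lemma build_G {X} (tau : set X -> Prop) {d : set X -> set X -> Prop} (Hd : quasi_proximity d)
  (Hc : qp_compatible tau d) :
  locally_compact tau -> ~ compact tau (@fullset X) -> lindelof tau -> zero_dimensional tau ->
  exists G : nat -> set X, (forall n x, G n x -> G (S n) x) /\
    (forall n, ~ d (G n) (compl (G n))) /\ (forall x, exists n, G n x) /\
    (forall n, exists y, ~ G n y).
Proof.
  intros Hlc Hnc Hlin Hzd.
  destruct (Hlin (fun U => tau U /\ compact tau U /\ ~ d U (compl U))) as [g [hg hgc]].
  - intros U h; apply h.
  - intros x. destruct (Hlc x) as (U & K & hU & hx & hUK & hK).
    destruct (Hzd U x hU hx) as (C & hC & hCc & hCx & hCU).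
    assert (hcC : compact tau C).
    { apply compact_closed_sub with K; auto. intros y hy; apply hUK, hCU, hy. }
    exists C; split; auto. split; auto. split; auto.
    apply compact_far with tau; auto. intros y hy; exact hy.
  - assert (hgf : forall m, ~ d (g m) (compl (g m)) /\ compact tau (g m)).
    { intro m. destruct (hg m) as [h|h]; [split; apply h|].
      split.
      - apply far_of_sub_empty; auto. intros x hx; apply (h x), hx.
      - intros F _ _. exists nil; split; [intros ? []|]. intros x hx; exfalso; apply (h x), hx. }
    exists (fun n x => exists m, m <= n /\ g m x).
    assert (HGS : forall n, set_eq (setU (fun x => exists m, m <= n /\ g m x) (g (S n)))
                              (fun x => exists m, m <= S n /\ g m x)).
    { intros n x; unfold setU; split.
      - intros [[m [hm hx]]|hx]; [exists m; split; auto|exists (S n); auto].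
      - intros [m [hm hx]]. destruct (Nat.eq_dec m (S n)) as [->|hne]; [right; auto|].
        left; exists m; split; auto; lia. }
    assert (HG0 : set_eq (g 0) (fun x => exists m, m <= 0 /\ g m x)).
    { intros x; split; [intro hx; exists 0; auto|intros [m [hm hx]]].
      replace m with 0 in hx by lia; auto. }
    split; [|split; [|split]].
    + intros n x [m [hm hx]]; exists m; split; auto.
    + induction n as [|n IH].
      * apply selffar_ext with (g 0); auto. apply hgf.
      * apply (selffar_ext Hd _ _ (HGS n)). apply selffar_union; auto. apply hgf.
    + intros x. destruct (hgc x) as [m hm]. exists m, m; auto.
    + assert (HGc : forall n, compact tau (fun x => exists m, m <= n /\ g m x)).
      { induction n as [|n IH].
        * apply compact_ext with (g 0); auto. apply hgf.
        * apply (compact_ext tau _ _ (HGS n)). apply compact_union; [exact IH|apply hgf]. }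
      intros n. apply NNPP; intro hn. apply Hnc.
      apply compact_ext with (fun x => exists m, m <= n /\ g m x); [|apply HGc].
      intro x; split; [intros _; exact I|intros _]. apply NNPP; intro hx; apply hn; eauto.
Qed.

Lemma build_H {X} {d : set X -> set X -> Prop} (G : nat -> set X) :
  (forall n x, G n x -> G (S n) x) ->
  (forall n, ~ d (G n) (compl (G n))) -> (forall x, exists n, G n x) ->
  (forall n, exists y, ~ G n y) ->
  exists (H : nat -> set X) (w : nat -> X), (forall n x, H n x -> H (S n) x) /\
    (forall n, ~ d (H n) (compl (H n))) /\ (forall x, exists n, H n x) /\
    (forall n, ~ H n (w n) /\ H (S n) (w n)).
Proof.
  intros Gm Gs Gc Gn.
  assert (Hex : forall m, exists m', exists y, ~ G m y /\ G m' y).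
  { intro m. destruct (Gn m) as [y hy]. destruct (Gc y) as [m' hm']. eauto. }
  pose (F := fun m => proj1_sig (constructive_indefinite_description _ (Hex m))).
  assert (FP : forall m, exists y, ~ G m y /\ G (F m) y).
  { intro m. exact (proj2_sig (constructive_indefinite_description _ (Hex m))). }
  pose (Wm := fun m => proj1_sig (constructive_indefinite_description _ (FP m))).
  assert (WP : forall m, ~ G m (Wm m) /\ G (F m) (Wm m)).
  { intro m. exact (proj2_sig (constructive_indefinite_description _ (FP m))). }
  pose (f := fix f (n : nat) : nat := match n with 0 => 0 | S k => F (f k) end).
  assert (Hle := mono_le G Gm).
  assert (Hlt : forall m, m < F m).
  { intro m. destruct (le_lt_dec (F m) m) as [h|h]; auto.
    exfalso. destruct (WP m) as [h1 h2]. apply h1, Hle with (F m); auto. }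
  assert (Hfn : forall n, n <= f n).
  { induction n as [|n IH]; simpl; [lia|]. specialize (Hlt (f n)). lia. }
  exists (fun n => G (f n)), (fun n => Wm (f n)).
  split; [|split; [|split]].
  - intros n x hx. simpl. apply Hle with (f n); auto. apply Nat.lt_le_incl, Hlt.
  - intro n; apply Gs.
  - intro x. destruct (Gc x) as [m hm]. exists m. apply Hle with m; auto.
  - intro n. apply WP.
Qed.

Theorem corollary2p13 (X : Type) (tau : set X -> Prop)
  (delta : set X -> set X -> Prop) :
  is_topology tau -> hausdorff tau -> locally_compact tau ->
  ~ compact tau (@fullset X) -> lindelof tau -> zero_dimensional tau ->
  quasi_proximity delta -> qp_compatible tau delta ->
  transitive_qu (V_delta delta) ->
  exists f : ((nat -> bool) -> Prop) -> (rel X -> Prop),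
    (forall S, pi_delta delta (f S) /\ in_T tau (f S)) /\
    (forall S S', (forall W, f S W <-> f S' W) -> forall p, S p <-> S' p).
Proof.
  intros _ _ Hlc Hnc Hlin Hzd Hd Hc Htr.
  destruct (build_G tau Hd Hc Hlc Hnc Hlin Hzd) as (G & Gm & Gs & Gc & Gn).
  destruct (@build_H X delta G Gm Gs Gc Gn) as (H & w & Hm & Hs & Hcov & Hw).
  exists (Qf delta H). split.
  - intro S1. apply (Q_good tau Hd Hc Htr H Hm Hs Hcov).
  - intros S1 S2 hE p. split.
    + apply (distinct Hd H w Hm Hw S1 S2 p). intros W; apply hE.
    + apply (distinct Hd H w Hm Hw S2 S1 p). intros W; apply hE.
Qed.
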